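(* Let $\varepsilon$ be an integer with $\varepsilon\equiv 0\pmod{4}$. Then there exist infinitely many positive odd integers $n$ with the property that there exist positive integers $d_1, d_2$, each dividing $\frac{n^2+1}{2}$, such that $d_1+d_2=2n+\varepsilon$. *)

(* Defs.v *)
From mathcomp Require Import all_boot all_algebra.

(* Main.v *)
Require Import Defs.
From mathcomp Require Import all_boot all_algebra.
From mathcomp Require Import zify ring lra.
Import GRing.Theory Num.Theory.

Local Open Scope ring_scope.

Lemma tt1 (t : int) : 0 <= t * (t - 1).
Proof. have [h|h] := lerP t 0; [apply: mulr_le0|apply: mulr_ge0]; lia. Qed.

Lemma chain (t : int) (j : nat) :
  let eps := 4 * t in let q := 2 * t ^+ 2 - 2 * t + 1 in
  let c := 16 * t ^+ 2 - 8 * t + 5 in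
  exists a b n : int,
    [/\ 1 <= a, a <= b, (c <= b) /\ (j%:Z <= b), a + b = 2 * n + eps &
        n ^+ 2 + 1 = 2 * q * a * b].
Proof.
move=> eps q c.
have hq : 1 <= q by have := tt1 t; rewrite /q; lia.
elim: j => [|j [a [b [n [H1 H2 [H3 H4] H5 H6]]]]].
  exists 1, c, (8 * t ^+ 2 - 6 * t + 3); split.
  - by [].
  - by have := tt1 t; have := sqr_ge0 t; rewrite /c; lia.
  - by split; have := tt1 t; have := sqr_ge0 t; rewrite /c; lia.
  - by rewrite /c /eps; ring.
  - by rewrite /q /c; ring.
exists b, ((8 * q - 2) * b + 2 * eps - a), (4 * q * b - n).
have Hg : b + 1 <= (8 * q - 2) * b + 2 * eps - a.
  have : 0 <= (q - 1) * b by apply: mulr_ge0; lia.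
  have := tt1 t; have := sqr_ge0 t; move: H3 H2; rewrite /eps /c; lia.
split; [lia|lia|split; lia| |].
- rewrite /eps in H5 *; lia.
- have -> : (4 * q * b - n) ^+ 2 + 1 = (n ^+ 2 + 1) + 16 * q ^+ 2 * b ^+ 2 - 8 * q * b * n by ring.
  rewrite H6.
  have -> : a = 2 * n + eps - b by lia.
  rewrite /q /eps; ring.
Qed.

Local Close Scope ring_scope.

Theorem theorem1 (eps : int) (heps : (eps %% 4)%Z = 0) :
  forall N : nat, exists n : nat,
    [/\ (N < n)%N, odd n &
      exists d1 d2 : nat,
        [/\ (0 < d1)%N, (0 < d2)%N,
            d1 %| (n ^ 2 + 1) %/ 2, d2 %| (n ^ 2 + 1) %/ 2 &
            (d1%:Z + d2%:Z = 2 * n%:Z + eps)%R]].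
Proof.
move=> N.
have [t Et] : exists t : int, eps = (4 * t)%R.
  exists (eps %/ 4)%Z; rewrite {1}(divz_eq eps 4) heps addr0 mulrC //.
have [a [b [n [H1 H2 [H3 H4] H5 H6]]]] := chain t (4 * N).
have hq : (1 <= 2 * t ^+ 2 - 2 * t + 1)%R by have := tt1 t; lia.
case: a H1 H2 H5 H6 => [A|A] H1 H2 H5 H6; last by move: H1; rewrite NegzE; lia.
case: b H2 H3 H4 H5 H6 => [B|B] H2 H3 H4 H5 H6; last by move: H2; lia.
case: n H5 H6 => [M|M] H5 H6; last first.
  exfalso; have := tt1 t; have := sqr_ge0 t; move: H5 H3 H1; rewrite NegzE ?Et; lia.
case: (2 * t ^+ 2 - 2 * t + 1)%R hq H6 => [Q|Q] hq H6; last by move: hq; rewrite NegzE; lia.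
have E : (M ^ 2 + 1 = 2 * (Q * A * B))%N by lia.
exists M; split.
- have := tt1 t; have := sqr_ge0 t; move: H5 H3 H4 H1; rewrite ?Et; lia.
- have := congr1 odd E; rewrite oddD oddX oddM /=.
  by case: (odd M).
- exists A, B; split; try lia.
  + by rewrite E mulKn // mulnAC dvdn_mull.
  + by rewrite E mulKn // dvdn_mull.
Qed.
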